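(* Let $(M,d)$ be a metric space, $\mathsf{P}\subseteq M$ a set of $n$ points, $1\le\ell\le k\le n$ integers and $m=\lfloor k/\ell\rfloor$. Let $\sigma_{\mathrm{med}}=\min_{S\subseteq\mathsf{P},|S|=m}\sum_{p\in\mathsf{P}} d_S(p,1)$ and $\sigma_{\mathrm{opt}}=\min_{C'\subseteq\mathsf{P},|C'|=k}\sum_{p\in\mathsf{P}} d_{C'}(p,\ell)$. Then $\sigma_{\mathrm{med}}\le 2\sigma_{\mathrm{opt}}$.
   Context: For a finite set $S\subseteq M$, a point $p\in M$ and an integer $1\le i\le|S|$, $d_S(p,i)$ denotes the radius of the smallest closed ball centered at $p$ containing at least $i$ points of $S$ (distance to the $i$-th nearest point of $S$). *)

(* Defs.v *)
From HB Require Import structures.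
From mathcomp Require Import all_boot all_order all_algebra.
Set Implicit Arguments. Unset Strict Implicit. Unset Printing Implicit Defensive.
Import Order.TTheory GRing.Theory Num.Theory.
Local Open Scope ring_scope.

Definition is_metric (R : realFieldType) (M : Type) (d : M -> M -> R) : Prop :=
  [/\ forall x y, 0 <= d x y,
      forall x y, d x y = 0 <-> x = y,
      forall x y, d x y = d y x
    & forall x y z, d x z <= d x y + d y z].

(* The point set P = { pts j | j : 'I_n } (pts injective); a subset S of P
   is represented by a set of indices S : {set 'I_n}.
   dS d pts S p i = distance from p to the i-th nearest point of S
   (i counted from 1): the (i-1)-th entry of the sorted list of distances. *)
Definition dS (R : realFieldType) (M : Type) (d : M -> M -> R) (n : nat)
  (pts : 'I_n -> M) (S : {set 'I_n}) (p : M) (i : nat) : R :=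
  nth 0 (sort <=%R [seq d p (pts s) | s <- enum S]) i.-1.

Definition cost (R : realFieldType) (M : Type) (d : M -> M -> R) (n : nat)
  (pts : 'I_n -> M) (S : {set 'I_n}) (i : nat) : R :=
  \sum_(j < n) dS d pts S (pts j) i.

Definition is_min_cost (R : realFieldType) (M : Type) (d : M -> M -> R)
  (n : nat) (pts : 'I_n -> M) (m i : nat) (v : R) : Prop :=
  (exists S : {set 'I_n}, #|S| = m /\ cost d pts S i = v) /\
  (forall S : {set 'I_n}, #|S| = m -> v <= cost d pts S i).

(* Main.v *)
Require Import Defs.
From HB Require Import structures.
From mathcomp Require Import all_boot all_order all_algebra.
Import Order.TTheory GRing.Theory Num.Theory.
Local Open Scope ring_scope.

Lemma count_card (T : finType) (S : {set T}) (P : pred T) :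
  count P (enum S) = #|[set s in S | P s]|.
Proof.
rewrite cardE /enum_mem -!size_filter -filter_predI. idtac.
by congr size; apply: eq_filter => x; rewrite !inE andbC.
Qed.

Lemma dS1_le (R : realFieldType) (M : Type) (d : M -> M -> R) (n : nat)
  (pts : 'I_n -> M) (S : {set 'I_n}) (x : M) s :
  s \in S -> dS d pts S x 1 <= d x (pts s).
Proof.
move=> sS; rewrite /dS /=.
have : d x (pts s) \in sort <=%R [seq d x (pts s) | s <- enum S].
  by rewrite mem_sort; apply: map_f; rewrite mem_enum.
have := sort_sorted (@le_total _ R) [seq d x (pts s) | s <- enum S].
case: (sort _ _) => [|a t] //= Hp.
rewrite inE => /orP [/eqP -> //|Ht].
by have /allP := order_path_min (@le_trans _ R) Hp; apply.
Qed.

Lemma dS_count (R : realFieldType) (M : Type) (d : M -> M -> R) (n : nat)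
  (pts : 'I_n -> M) (S : {set 'I_n}) (x : M) i :
  (1 <= i)%N -> (i <= #|S|)%N ->
  (i <= #|[set s in S | (d x (pts s) <= dS d pts S x i)%R]|)%N.
Proof.
move=> i1 iS; rewrite -count_card /dS.
set r := nth _ _ _.
rewrite -[count _ _]/(count ((fun y => y <= r) \o (fun s => d x (pts s))) (enum S)).
rewrite -count_map.
have Hp : perm_eq (sort <=%R [seq d x (pts s) | s <- enum S]) [seq d x (pts s) | s <- enum S] by rewrite perm_sort.
rewrite -(permP Hp).
set t := sort _ _.
have st : size t = #|S| by rewrite size_sort size_map cardE.
have sorted_t : sorted <=%R t by apply: sort_sorted; apply: le_total.
rewrite -(cat_take_drop i t) count_cat.
apply: leq_trans (leq_addr _ _).
have -> : count (fun y => y <= r) (take i t) = size (take i t).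
  apply/eqP; rewrite -all_count; apply/(all_nthP 0) => j.
  rewrite size_takel ?st // => ji.
  rewrite nth_take //.
  apply: (sorted_leq_nth (@le_trans _ R) (@lexx _ R) 0 sorted_t); rewrite ?inE ?st.
  - exact: leq_trans ji iS.
  - by rewrite (leq_trans _ iS) // prednK.
  - by rewrite -ltnS prednK.
by rewrite size_takel ?st.
Qed.
Lemma greedy (R : realFieldType) (I : finType) (D : I -> I -> R) (r : I -> R)
  (N : I -> {set I}) (C : {set I}) (l : nat) :
  (0 < l)%N -> (forall j, l <= #|N j|)%N -> (forall j, N j \subset C) ->
  (forall q p, N q :&: N p != set0 -> D q p <= r q + r p) ->
  exists Sel : {set I}, (l * #|Sel| <= #|C|)%N /\
    forall q, exists2 p, p \in Sel & D q p <= 2 * r q.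
Proof.
move=> l0 lN NC DN.
have N0 : forall j, N j :&: N j != set0.
  by move=> j; rewrite setIid -card_gt0 (leq_trans l0).
suff aux : forall s (T U Sel : {set I}), (#|T| <= s)%N -> U \subset C ->
   (l * #|Sel| <= #|U|)%N ->
   (forall q, q \notin T -> exists2 p, p \in Sel & D q p <= 2 * r q) ->
   (forall q, q \in T -> [disjoint N q & U]) ->
   exists Sel : {set I}, (l * #|Sel| <= #|C|)%N /\
    forall q, exists2 p, p \in Sel & D q p <= 2 * r q.
  apply: (aux #|[set: I]| [set: I] set0 set0) => //.
  - exact: sub0set.
  - by rewrite cards0 muln0.
  - by move=> q; rewrite inE.
  - by move=> q _; rewrite -setI_eq0 setI0.
elim=> [|s IH] T U Sel Ts UC SU cov dis.
  have T0 : T = set0 by apply/eqP; rewrite -cards_eq0 -leqn0.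
  exists Sel; split; first exact: leq_trans SU (subset_leq_card UC).
  by move=> q; apply: cov; rewrite T0 inE.
case: (set_0Vmem T) => [T0|[q0 q0T]].
  exists Sel; split; first exact: leq_trans SU (subset_leq_card UC).
  by move=> q; apply: cov; rewrite T0 inE.
case: (@arg_minP _ _ _ q0 (mem T) r q0T) => q1 q1T q1min.
set T' := [set q in T | [disjoint N q & N q1]].
apply: (IH T' (U :|: N q1) (q1 |: Sel)).
- have : T' \proper T.
    apply/properP; split; first by apply/subsetP => q; rewrite inE => /andP [].
    exists q1 => //; rewrite inE -setI_eq0 negb_and; apply/orP; right.
    by rewrite (negbTE (N0 q1)).
  by move/proper_card => H; rewrite -ltnS (leq_trans H).
- by rewrite subUset UC NC.
- rewrite cardsU1 cardsU setIC (disjoint_setI0 (dis q1 q1T)) cards0 subn0.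
  rewrite mulnDr addnC leq_add //; case: (q1 \notin Sel); rewrite ?muln1 ?muln0 //.
- move=> q; rewrite inE negb_and; case: (boolP (q \in T)) => qT /=.
    move=> ndis; exists q1; first exact: setU11.
    rewrite -setI_eq0 in ndis; apply: le_trans (DN _ _ ndis) _.
    by rewrite mulr_natl mulr2n lerD2l q1min.
  by move=> _; case: (cov q qT) => p pS Hp; exists p => //; rewrite setU1r.
- move=> q; rewrite inE => /andP [qT dq].
  by rewrite -setI_eq0 setIUr (disjoint_setI0 (dis q qT)) (disjoint_setI0 dq) setU0 eqxx.
Qed.

From mathcomp Require Import zify.

Lemma pad (T : finType) (A : {set T}) m : (#|A| <= m)%N -> (m <= #|T|)%N ->
  exists B : {set T}, A \subset B /\ #|B| = m.
Proof.
move e: (m - #|A|)%N => k; elim: k A e => [|k IH] A e Am mT.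
  by exists A; split => //; apply/eqP; rewrite eqn_leq Am /=; lia.
have : ~~ ([set: T] \subset A).
  apply/negP => /subset_leq_card; rewrite cardsT; lia.
case/subsetPn => x _ xA.
case: (IH (x |: A)); rewrite ?cardsU1 ?xA //=; try lia.
move=> B [sB cB]; exists B; split => //.
by apply: subset_trans sB; apply: subsetUr.
Qed.

Theorem claim2 (R : realFieldType) (M : Type) (d : M -> M -> R)
  (n : nat) (pts : 'I_n -> M) (l k : nat) (sigma_med sigma_opt : R) :
  is_metric d -> injective pts ->
  (1 <= l)%N -> (l <= k)%N -> (k <= n)%N ->
  is_min_cost d pts (k %/ l) 1 sigma_med ->
  is_min_cost d pts k l sigma_opt ->
  sigma_med <= 2 * sigma_opt.
Proof.
move=> [d0 dE dsym dtri] _ l1 lk kn [_ medmin] [[C [Ck Copt]] _].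
pose r j := dS d pts C (pts j) l.
pose N j := [set c in C | d (pts j) (pts c) <= r j].
have [|||Sel [SelC Selcov]] := @greedy R _ (fun q p => d (pts q) (pts p)) r N C l l1.
- by move=> j; apply: dS_count => //; rewrite Ck.
- by move=> j; apply/subsetP => c; rewrite inE => /andP [].
- move=> q p /set0Pn [c]; rewrite !inE => /andP [/andP [_ Hq] /andP [_ Hp]].
  apply: le_trans (dtri _ (pts c) _) _; apply: lerD => //.
  by rewrite dsym.
have Sk : (#|Sel| <= k %/ l)%N by rewrite leq_divRL // mulnC -Ck.
have [S [SelS cS]] := @pad _ Sel _ Sk (leq_trans (leq_div _ _) (leq_trans kn (eq_leq (esym (card_ord n))))).
apply: le_trans (medmin S cS) _.
rewrite -Copt /cost mulr_sumr; apply: ler_sum => j _.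
have [p pS Hp] := Selcov j.
by apply: le_trans Hp; apply: dS1_le; apply: (subsetP SelS).
Qed.
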